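(* Let $\mathcal{T}$ be a single-elimination tournament with at least $2$ vertices and $\widehat{B}$ a bracket of $\mathcal{T}$. Let $a,b$ be distinct players such that the unique out-neighbour $x_a$ of $a$ satisfies $b\in\{\widehat{B}(v):v\in N^-(x_a)\}$. Then for any brackets $B,B'$ and any scoring system $\sigma$ with $\mathrm{score}_\sigma(\widehat{B}_a,B)=\mathrm{score}_\sigma(\widehat{B}_a,B')$ and $\mathrm{score}_\sigma(\widehat{B}_b,B)=\mathrm{score}_\sigma(\widehat{B}_b,B')$, we have for all $x\in M(\mathcal{T})$ that $B(x)=a$ if and only if $B'(x)=a$.
   Context: A single-elimination tournament is a finite directed graph $\mathcal{T}$ such that: (a) $\mathcal{T}$ has exactly one sink (vertex with no out-neighbours); (b) every non-sink vertex has exactly one out-neighbour; (c) $\mathcal{T}$ has no directed cycles; (d) $|N^-(v)|\ne 1$ for every vertex $v$, where $N^-(v)$ denotes the set of in-neighbours of $v$. The players $P(\mathcal{T})$ are the sources and the matches are $M(\mathcal{T})=V(\mathcal{T})\setminus P(\mathcal{T})$. For a vertex $u$, $P(u)$ is the set of players $c$ for which there is a directed walk from $c$ to $u$ (length $0$ allowed). A bracket is a function $B:V(\mathcal{T})\to P(\mathcal{T})$ with $B(c)=c$ for every player $c$ and $B(x)\in\{B(u):u\in N^-(x)\}$ for every match $x$. For a bracket $\widehat{B}$ and player $c$, $\widehat{B}_c$ is the bracket with $\widehat{B}_c(u)=c$ if $c\in P(u)$ and $\widehat{B}_c(u)=\widehat{B}(u)$ otherwise. A scoring system is any function $\sigma:M(\mathcal{T})\to\mathbb{R}_{>0}$,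 and $\mathrm{score}_\sigma(B,B')=\sum_{x\in M(\mathcal{T}):\,B(x)=B'(x)}\sigma(x)$. *)

(* Defs.v *)
From HB Require Import structures.
From mathcomp Require Import all_boot all_order all_algebra.
Set Implicit Arguments. Unset Strict Implicit. Unset Printing Implicit Defensive.
Import Order.TTheory GRing.Theory Num.Theory.

Section Tournament.
Variables (V : finType) (e : rel V).

Definition Nout (v : V) : {set V} := [set w | e v w].
Definition Nin (v : V) : {set V} := [set u | e u v].

Definition is_sink (v : V) : bool := Nout v == set0.

Definition single_elim : Prop :=
  [/\ #|[set v | is_sink v]| = 1,
      (forall v, ~~ is_sink v -> #|Nout v| = 1),
      (* (c) no directed cycles (walks of positive length from v back to v) *)
      (forall u v, e u v -> ~~ connect e v u) &
      (forall v, #|Nin v| != 1)].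

Definition is_player (v : V) : bool := Nin v == set0.
Definition is_match (v : V) : bool := ~~ is_player v.

Definition Pl (u : V) : {set V} := [set c | is_player c & connect e c u].

Definition is_bracket (B : V -> V) : Prop :=
  [/\ (forall v, is_player (B v)),
      (forall c, is_player c -> B c = c) &
      (forall x, is_match x -> B x \in [set B u | u in Nin x])].

Definition bracket_force (Bh : V -> V) (c : V) : V -> V :=
  fun u => if c \in Pl u then c else Bh u.

Definition score (R : numDomainType) (sigma : V -> R) (B B' : V -> V) : R :=
  (\sum_(x | is_match x && (B x == B' x)) sigma x)%R.

End Tournament.

(* Main.v *)
Require Import Defs.
From HB Require Import structures.
From mathcomp Require Import all_boot all_order all_algebra.
From mathcomp Require Import lra.
Import Order.TTheory GRing.Theory Num.Theory.
Set Implicit Arguments. Unset Strict Implicit.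

Lemma out_uniq (V : finType) (e : rel V) (HT : single_elim e) u w1 w2 :
  e u w1 -> e u w2 -> w1 = w2.
Proof.
case: HT => _ Hb _ _ h1 h2.
have ns : ~~ is_sink e u.
  by rewrite /is_sink; apply/set0Pn; exists w1; rewrite inE.
have /eqP/cards1P [z Hz] := Hb u ns.
have : w1 \in Nout e u by rewrite inE.
have : w2 \in Nout e u by rewrite inE.
by rewrite Hz !inE => /eqP -> /eqP ->.
Qed.

Lemma conn_step (V : finType) (e : rel V) u y :
  connect e u y -> u = y \/ exists2 w, e u w & connect e w y.
Proof.
case/connectP => [[|w p]] /=; first by move=> _ ->; left.
case/andP => euw pw ly; right; exists w => //; apply/connectP; exists p => //.
Qed.

Lemma conn_up (V : finType) (e : rel V) (HT : single_elim e) u w y :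
  connect e u y -> e u w -> u = y \/ connect e w y.
Proof.
move=> /conn_step [->|[w' ew' cw']] euw; first by left.
by right; rewrite (out_uniq HT euw ew').
Qed.

Lemma acyc (V : finType) (e : rel V) (HT : single_elim e) u v :
  e u v -> ~~ connect e v u.
Proof. by case: HT => _ _ H _; apply: H. Qed.

Lemma cmp (V : finType) (e : rel V) (HT : single_elim e) c x y :
  connect e c x -> connect e c y -> connect e x y || connect e y x.
Proof.
move/connectP => [p Hp ->].
elim: p c Hp y => [|w p IH] c /=; first by move=> _ y ->.
case/andP => ecw Hp y Hy.
case: (conn_step Hy) => [<-|[w' ecw' Hw']].
  apply/orP; right; apply/connectP; exists (w :: p) => //=.
  by rewrite ecw Hp.
have ew := out_uniq HT ecw ecw'. subst w'.
exact: IH.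
Qed.

Lemma in_uniq (V : finType) (e : rel V) (HT : single_elim e) c u x w :
  e u w -> e x w -> connect e c u -> connect e c x -> u = x.
Proof.
move=> euw exw cu cx.
case/orP: (cmp HT cu cx) => H.
  case: (conn_up HT H euw) => // Hwx.
  by move: (acyc HT exw); rewrite Hwx.
case: (conn_up HT H exw) => [->|Hwu] //.
by move: (acyc HT euw); rewrite Hwu.
Qed.

Lemma br_conn (V : finType) (e : rel V) (HT : single_elim e) (B : V -> V)
  (HB : is_bracket e B) v : connect e (B v) v.
Proof.
have [_ Hp Hx] := HB.
suff : forall n v, #|[set w | connect e w v]| < n -> connect e (B v) v.
  by move=> /(_ _ v (ltnSn _)).
elim=> [|n IH] v' //. rewrite ltnS => Hn.
case: (boolP (is_match e v')) => Hm; last first.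
  by rewrite Hp ?connect0 //; move: Hm; rewrite negbK.
case/imsetP: (Hx v' Hm) => u uin ->. rewrite inE in uin.
apply: connect_trans (IH u _) (connect1 uin).
apply: leq_trans Hn; apply: proper_card; apply/properP; split.
  by apply/subsetP => w; rewrite !inE => Hw; exact: connect_trans Hw (connect1 uin).
by exists v'; rewrite !inE ?connect0 // (negbTE (acyc HT uin)).
Qed.

Lemma br_down (V : finType) (e : rel V) (HT : single_elim e) (B : V -> V)
  (HB : is_bracket e B) c v x :
  B v = c -> connect e x v -> connect e c x -> B x = c.
Proof.
move=> Hv /connectP [p Hp Hl]; subst v.
elim: p x Hp Hv => [|w p IH] x /=; first by move=> _ ->.
case/andP => exw Hp Hv Hcx.
have Bw : B w = c := IH w Hp Hv (connect_trans Hcx (connect1 exw)).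
have wm : is_match e w.
  by rewrite /is_match /is_player; apply/set0Pn; exists x; rewrite inE.
have [_ _ Hx] := HB.
case/imsetP: (Hx w wm) => u uin Hu. rewrite inE in uin.
have cu : connect e c u by rewrite -Bw Hu; exact: br_conn.
by rewrite -(in_uniq HT uin exw cu Hcx) -Hu.
Qed.

Lemma not_self_match (V : finType) (e : rel V) a x :
  is_player e a -> is_match e x -> x != a.
Proof. by move=> Ha; apply: contraL => /eqP ->; rewrite /is_match Ha. Qed.

Lemma a_to_b (V : finType) (e : rel V) (HT : single_elim e) (Bh : V -> V)
  (HBh : is_bracket e Bh) a b xa :
  e a xa -> b \in [set Bh v | v in Nin e xa] ->
  forall x, connect e a x -> x != a -> connect e b x.
Proof.
move=> eaxa /imsetP [v vin ->] x cax xna. rewrite inE in vin.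
case: (conn_up HT cax eaxa) => [H|H]; first by rewrite H eqxx in xna.
exact: connect_trans (br_conn HT HBh v) (connect_trans (connect1 vin) H).
Qed.

Lemma b_not_a (V : finType) (e : rel V) (HT : single_elim e) (Bh : V -> V)
  (HBh : is_bracket e Bh) a b xa :
  e a xa -> b \in [set Bh v | v in Nin e xa] ->
  forall x, connect e b x -> ~~ connect e a x -> Bh x = b.
Proof.
move=> eaxa /imsetP [v vin ->] x cbx ncax. rewrite inE in vin.
have cbv := br_conn HT HBh v.
case/orP: (cmp HT cbv cbx) => H.
  case: (conn_up HT H vin) => [<-|H2] //.
  by rewrite (connect_trans (connect1 eaxa) H2) in ncax.
exact: (br_down HT HBh (erefl (Bh v)) H cbx).
Qed.

Definition hterm (V : finType) (R : numDomainType) (sigma : V -> R) (a b : V)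
  (B : V -> V) (y : V) : R :=
  ((if B y == a then sigma y else 0) - (if B y == b then sigma y else 0))%R.

Definition Gsum (V : finType) (e : rel V) (R : numDomainType) (sigma : V -> R)
  (a b : V) (B : V -> V) : R :=
  (\sum_(y | is_match e y && connect e a y) hterm sigma a b B y)%R.

Lemma score_diff (V : finType) (e : rel V) (HT : single_elim e) (R : numDomainType)
  (Bh : V -> V) (HBh : is_bracket e Bh) a b xa
  (Ha : is_player e a) (Hb : is_player e b)
  (eaxa : e a xa) (bin : b \in [set Bh v | v in Nin e xa])
  (sigma : V -> R) (B : V -> V) :
  (score e sigma (bracket_force e Bh a) B - score e sigma (bracket_force e Bh b) B
  = Gsum e sigma a b B)%R.
Proof.
rewrite /score !big_mkcondr -sumrB /Gsum [RHS]big_mkcondr.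
apply: eq_bigr => x xm.
rewrite /bracket_force /Pl !inE Ha Hb /=.
case: (boolP (connect e a x)) => cax.
  rewrite (a_to_b HT HBh eaxa bin cax (not_self_match Ha xm)) /hterm.
  by rewrite (eq_sym a) (eq_sym b).
case: (boolP (connect e b x)) => cbx; last by rewrite subrr.
by rewrite (b_not_a HT HBh eaxa bin cbx cax) subrr.
Qed.

Lemma noB_b (V : finType) (e : rel V) (HT : single_elim e) (Bh : V -> V)
  (HBh : is_bracket e Bh) a b xa (Ha : is_player e a) (Hab : a != b)
  (eaxa : e a xa) (bin : b \in [set Bh v | v in Nin e xa])
  (B : V -> V) (HB : is_bracket e B) x (xm : is_match e x) (Bx : B x = a) y :
  is_match e y -> connect e a y -> B y != b.
Proof.
move=> ym cay; apply/eqP => Byb.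
have cbxa : connect e b xa.
  case/imsetP: bin => v vin ->; rewrite inE in vin.
  exact: connect_trans (br_conn HT HBh v) (connect1 vin).
have cax : connect e a x by rewrite -{1}Bx; exact: br_conn.
have cxay : connect e xa y.
  by case: (conn_up HT cay eaxa) => // H; move: (not_self_match Ha ym); rewrite H eqxx.
have cxax : connect e xa x.
  by case: (conn_up HT cax eaxa) => // H; move: (not_self_match Ha xm); rewrite H eqxx.
have h1 := br_down HT HB Byb cxay cbxa.
have h2 := br_down HT HB Bx cxax (connect1 eaxa).
by move: Hab; rewrite -h1 -h2 eqxx.
Qed.

Lemma key (V : finType) (e : rel V) (HT : single_elim e) (R : realFieldType)
  (Bh : V -> V) (HBh : is_bracket e Bh) a b xa (Ha : is_player e a) (Hab : a != b)
  (eaxa : e a xa) (bin : b \in [set Bh v | v in Nin e xa])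
  (B B' : V -> V) (HB : is_bracket e B) (HB' : is_bracket e B')
  (sigma : V -> R) (Hsigma : forall x, is_match e x -> (0 < sigma x)%R)
  x (xm : is_match e x) (Bx : B x = a) (B'x : B' x != a) :
  (Gsum e sigma a b B' < Gsum e sigma a b B)%R.
Proof.
have cax : connect e a x by rewrite -{1}Bx; exact: br_conn.
have Tx : is_match e x && connect e a x by rewrite xm cax.
rewrite /Gsum (bigD1 x Tx) /= [X in (_ < X)%R](bigD1 x Tx) /=.
apply: ltr_leD.
  rewrite /hterm Bx eqxx (negbTE Hab) subr0 (negbTE B'x) sub0r.
  apply: le_lt_trans (Hsigma x xm); rewrite lerNl oppr0.
  by case: ifP => _ //; exact: ltW (Hsigma x xm).
apply: ler_sum => y /andP [/andP [ym cay] yx].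
have sy := Hsigma y ym.
have nb := noB_b HT HBh Ha Hab eaxa bin HB xm Bx ym cay.
rewrite /hterm (negbTE nb) subr0.
case: (boolP (connect e y x)) => cyx.
  rewrite (br_down HT HB Bx cyx cay) eqxx.
  by case: ifP => _; case: ifP => _; lra.
have cxy : connect e x y.
  by move: (cmp HT cax cay); rewrite (negbTE cyx) orbF.
have nB'y : B' y != a.
  by apply: contra B'x => /eqP B'y; apply/eqP; exact: (br_down HT HB' B'y cxy cax).
rewrite (negbTE nB'y).
by case: ifP => _; case: ifP => _; lra.
Qed.

Unset Implicit Arguments.

Theorem lemma5p9 (V : finType) (e : rel V) (R : realFieldType)
  (HT : single_elim e) (H2 : 2 <= #|V|)
  (Bh : V -> V) (HBh : is_bracket e Bh)
  (a b : V) (Ha : is_player e a) (Hb : is_player e b) (Hab : a != b)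
  (Hxa : exists2 xa, e a xa & b \in [set Bh v | v in Nin e xa])
  (B B' : V -> V) (HB : is_bracket e B) (HB' : is_bracket e B')
  (sigma : V -> R) (Hsigma : forall x, is_match e x -> (0 < sigma x)%R)
  (Hsa : score e sigma (bracket_force e Bh a) B = score e sigma (bracket_force e Bh a) B')
  (Hsb : score e sigma (bracket_force e Bh b) B = score e sigma (bracket_force e Bh b) B') :
  forall x, is_match e x -> (B x = a <-> B' x = a).
Proof.
move=> x xm; case: Hxa => xa eaxa bin.
have GE : Gsum e sigma a b B = Gsum e sigma a b B'.
  by rewrite -(score_diff HT HBh Ha Hb eaxa bin) Hsa Hsb (score_diff HT HBh Ha Hb eaxa bin).
split=> Hx.
  case: (eqVneq (B' x) a) => // Hn.
  by have := key HT HBh Ha Hab eaxa bin HB HB' Hsigma xm Hx Hn; rewrite GE ltxx.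
case: (eqVneq (B x) a) => // Hn.
by have := key HT HBh Ha Hab eaxa bin HB' HB Hsigma xm Hx Hn; rewrite GE ltxx.
Qed.
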